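(* Let $G$ be a group acting on a set $X$. Let $A\subset G$ and $Y\subset X$ be nonempty with $Y$ finite, and suppose there exists $\alpha\in\,]0,1[$ such that $\mathrm{Sym}_{\alpha}(Y)\subset AA^{-1}$ and $|A^{-1}\cdot Y|\leq\frac{3-\alpha}{2}|Y|$. Then $AA^{-1}$ is a subgroup of $G$.
   Context: $AA^{-1}=\{ab^{-1}\mid a,b\in A\}$, $A^{-1}\cdot Y=\{a^{-1}\cdot y\mid a\in A,y\in Y\}$, and $\mathrm{Sym}_{\alpha}(Y)=\{g\in G\mid |g\cdot Y\cap Y|\geq\alpha|Y|\}$. *)

(* Defs.v *)
From Stdlib Require Import Reals List.
Import ListNotations.

Record Group := {
  gcar :> Type;
  gmul : gcar -> gcar -> gcar;
  ginv : gcar -> gcar;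
  gone : gcar;
  gmulA : forall x y z, gmul x (gmul y z) = gmul (gmul x y) z;
  gmul1l : forall x, gmul gone x = x;
  gmulVl : forall x, gmul (ginv x) x = gone
}.

Record Action (G : Group) (X : Type) := {
  act : G -> X -> X;
  act1 : forall x, act (gone G) x = x;
  actM : forall g h x, act (gmul G g h) x = act g (act h x)
}.
Arguments act {G X} _ _ _.

Definition has_card {T : Type} (S : T -> Prop) (n : nat) : Prop :=
  exists l : list T, NoDup l /\ (forall x, In x l <-> S x) /\ length l = n.

Definition AAinv (G : Group) (A : G -> Prop) : G -> Prop :=
  fun g => exists a b, A a /\ A b /\ g = gmul G a (ginv G b).

Definition invA_act (G : Group) (X : Type) (ac : Action G X)
  (A : G -> Prop) (Y : X -> Prop) : X -> Prop :=
  fun x => exists a y, A a /\ Y y /\ x = act ac (ginv G a) y.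

Definition transl_cap (G : Group) (X : Type) (ac : Action G X)
  (g : G) (Y : X -> Prop) : X -> Prop :=
  fun x => Y x /\ exists y, Y y /\ x = act ac g y.

Definition Sym (G : Group) (X : Type) (ac : Action G X)
  (alpha : R) (Y : X -> Prop) : G -> Prop :=
  fun g => exists k nY, has_card (transl_cap G X ac g Y) k /\ has_card Y nY /\
                        (INR k >= alpha * INR nY)%R.

Definition is_subgroup (G : Group) (S : G -> Prop) : Prop :=
  S (gone G) /\ (forall x y, S x -> S y -> S (gmul G x y)) /\
  (forall x, S x -> S (ginv G x)).

(* Main.v *)
Require Import Defs.
From Stdlib Require Import Reals.
From Stdlib Require Import List FinFun ClassicalEpsilon Permutation Lia Lra.

Section Counting.
Variable T : Type.

Definition db (P : Prop) : bool := if excluded_middle_informative P then true else false.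
Lemma dbP (P : Prop) : db P = true <-> P.
Proof. unfold db; destruct (excluded_middle_informative P); split; intros; auto; discriminate. Qed.

Definition cnt (l : list T) (P : T -> Prop) := length (filter (fun x => db (P x)) l).

Lemma has_card_filter l P : NoDup l -> has_card (fun x => In x l /\ P x) (cnt l P).
Proof.
  intros Hl. exists (filter (fun x => db (P x)) l). split; [apply NoDup_filter; auto|].
  split; [|reflexivity]. intros x. rewrite filter_In, dbP. tauto.
Qed.

Lemma card_unique (P : T -> Prop) p q : has_card P p -> has_card P q -> p = q.
Proof.
  intros [l1 [N1 [H1 L1]]] [l2 [N2 [H2 L2]]]. subst.
  apply Permutation_length, NoDup_Permutation; auto.
  intros x; rewrite H1, H2; tauto.
Qed.

Lemma has_card_ext (P Q : T -> Prop) n : (forall x, P x <-> Q x) -> has_card P n -> has_card Q n.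
Proof. intros E [l [N [H L]]]. exists l; split; auto; split; auto. intros x; rewrite H; auto. Qed.

Lemma card_sub_exists (P Q : T -> Prop) q : has_card Q q -> (forall x, P x -> Q x) ->
  exists p, has_card P p /\ (p <= q)%nat.
Proof.
  intros [l [N [H L]]] S. exists (cnt l P). split.
  - eapply has_card_ext; [|apply has_card_filter; auto].
    intros x; split; [tauto|]. intros Px; split; auto. apply H; auto.
  - subst. apply filter_length_le.
Qed.

Lemma card_mono (P Q : T -> Prop) p q : (forall x, P x -> Q x) -> has_card P p -> has_card Q q -> (p <= q)%nat.
Proof.
  intros S HP HQ. destruct (card_sub_exists P Q q HQ S) as [p' [H' L]].
  rewrite (card_unique _ _ _ HP H'); auto.
Qed.

Lemma cnt_cons a l P : cnt (a :: l) P = ((if db (P a) then 1 else 0) + cnt l P)%nat.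
Proof. unfold cnt; simpl. destruct (db (P a)); reflexivity. Qed.

Lemma cnt_ie l P Q : (cnt l P + cnt l Q = cnt l (fun x => P x /\ Q x) + cnt l (fun x => P x \/ Q x))%nat.
Proof.
  induction l as [|a l IH]; [reflexivity|]. rewrite !cnt_cons.
  revert IH.
  generalize (cnt l P) (cnt l Q) (cnt l (fun x => P x /\ Q x)) (cnt l (fun x => P x \/ Q x)).
  intros n1 n2 n3 n4 IH.
  unfold db.
  destruct (excluded_middle_informative (P a)) as [p1|p1];
  destruct (excluded_middle_informative (Q a)) as [p2|p2].
  - destruct (excluded_middle_informative (P a /\ Q a)); [|tauto].
    destruct (excluded_middle_informative (P a \/ Q a)); [|tauto]. lia.
  - destruct (excluded_middle_informative (P a /\ Q a)); [tauto|].
    destruct (excluded_middle_informative (P a \/ Q a)); [|tauto]. lia.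
  - destruct (excluded_middle_informative (P a /\ Q a)); [tauto|].
    destruct (excluded_middle_informative (P a \/ Q a)); [|tauto]. lia.
  - destruct (excluded_middle_informative (P a /\ Q a)); [tauto|].
    destruct (excluded_middle_informative (P a \/ Q a)); [tauto|]. lia.
Qed.

Lemma incl_excl (P Q S : T -> Prop) p q s :
  (forall x, P x -> S x) -> (forall x, Q x -> S x) ->
  has_card P p -> has_card Q q -> has_card S s ->
  exists r, has_card (fun x => P x /\ Q x) r /\ (p + q <= s + r)%nat.
Proof.
  intros SP SQ HP HQ HS. destruct HS as [l [N [H L]]].
  assert (E : forall R : T -> Prop, (forall x, R x -> S x) -> has_card R (cnt l R)).
  { intros R SR. eapply has_card_ext; [|apply has_card_filter; auto].
    intros x; split; [tauto|]. intros Rx; split; auto. apply H; auto. }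
  exists (cnt l (fun x => P x /\ Q x)). split.
  - apply E. intros x [Px _]; auto.
  - rewrite (card_unique _ _ _ HP (E P SP)), (card_unique _ _ _ HQ (E Q SQ)).
    rewrite cnt_ie. subst s. pose proof (filter_length_le (fun x => db (P x \/ Q x)) l).
    unfold cnt at 2. lia.
Qed.

End Counting.

Lemma card_image {T U : Type} (f : T -> U) (P : T -> Prop) p :
  (forall x y, f x = f y -> x = y) -> has_card P p ->
  has_card (fun x => exists y, P y /\ x = f y) p.
Proof.
  intros Inj [l [N [H L]]]. exists (map f l). split; [apply Injective_map_NoDup; auto|].
  split; [|rewrite length_map; auto].
  intros x. rewrite in_map_iff. split.
  - intros [y [<- Hy]]. exists y; split; auto. apply H; auto.
  - intros [y [Py ->]]. exists y; split; auto. apply H; auto.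
Qed.

Section GroupFacts.
Variable G : Group.
Lemma gmulVr (x : G) : gmul G x (ginv G x) = gone G.
Proof.
  rewrite <- (gmul1l G (gmul G x (ginv G x))).
  rewrite <- (gmulVl G (ginv G x)) at 1.
  rewrite <- gmulA, (gmulA G (ginv G x)), gmulVl, gmul1l. apply gmulVl.
Qed.
Lemma gmul1r (x : G) : gmul G x (gone G) = x.
Proof. rewrite <- (gmulVl G x), gmulA, gmulVr, gmul1l; auto. Qed.
Lemma ginv_unique (x y : G) : gmul G x y = gone G -> ginv G x = y.
Proof.
  intros E. rewrite <- (gmul1r (ginv G x)), <- E, gmulA, gmulVl, gmul1l; auto.
Qed.
End GroupFacts.

Section Act.
Variables (G : Group) (X : Type) (ac : Action G X).
Lemma act_inv_l g x : act ac (ginv G g) (act ac g x) = x.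
Proof. rewrite <- actM, gmulVl, act1; auto. Qed.
Lemma act_inv_r g x : act ac g (act ac (ginv G g) x) = x.
Proof. rewrite <- actM, gmulVr, act1; auto. Qed.
Lemma act_inj g x y : act ac g x = act ac g y -> x = y.
Proof. intros E. rewrite <- (act_inv_l g x), E, act_inv_l; auto. Qed.
End Act.

Theorem mainTheorem3 (G : Group) (X : Type) (ac : Action G X)
  (A : G -> Prop) (Y : X -> Prop) (nY : nat) (alpha : R) :
  (exists a, A a) ->
  has_card Y nY -> (0 < nY)%nat ->
  (0 < alpha < 1)%R ->
  (forall g, Sym G X ac alpha Y g -> AAinv G A g) ->
  (exists m, has_card (invA_act G X ac A Y) m /\
             (INR m <= (3 - alpha) / 2 * INR nY)%R) ->
  is_subgroup G (AAinv G A).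
Proof.
  intros [a0 Ha0] HY Hn Hal HSym [m [Hm Hmle]].
  set (big := fun g => exists k, has_card (transl_cap G X ac g Y) k /\
                         (2 * INR k >= (1 + alpha) * INR nY)%R).
  set (Pc := fun c : G => fun z => exists y, Y y /\ z = act ac (ginv G c) y).
  assert (HPc : forall c, has_card (Pc c) nY).
  { intros c. apply card_image; auto. apply act_inj. }
  assert (Step1 : forall a b, A a -> A b -> big (gmul G a (ginv G b))).
  { intros a b Ha Hb.
    destruct (incl_excl _ (Pc b) (Pc a) (invA_act G X ac A Y) nY nY m) as [r [Hr Hle]];
      auto.
    - intros x [y [Hy ->]]. exists b, y; auto.
    - intros x [y [Hy ->]]. exists a, y; auto.
    - exists r. split.
      + eapply has_card_ext; [|apply (card_image (act ac a)); [apply act_inj|exact Hr]].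
        intros x; split.
        * intros [z [[[y1 [Hy1 E1]] [y2 [Hy2 E2]]] ->]]. split.
          -- rewrite E2, act_inv_r; auto.
          -- exists y1; split; auto. rewrite E1, actM; auto.
        * intros [Hx [y [Hy Hxy]]]. exists (act ac (ginv G a) x). split; [split|].
          -- exists y; split; auto. rewrite Hxy, <- actM, gmulA, gmulVl, gmul1l; auto.
          -- exists x; split; auto.
          -- rewrite act_inv_r; auto.
      + apply le_INR in Hle. rewrite !plus_INR in Hle. lra. }
  assert (Step2 : forall g h, big g -> big h -> AAinv G A (gmul G g h)).
  { intros g h [kg [Hkg Hg]] [kh [Hkh Hh]]. apply HSym.
    set (S := fun x => exists y, Y y /\ x = act ac g y).
    set (P := fun x => exists y, transl_cap G X ac h Y y /\ x = act ac g y).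
    destruct (incl_excl _ P (transl_cap G X ac g Y) S kh kg nY) as [r [Hr Hle]].
    - intros x [y [[Hy _] ->]]. exists y; auto.
    - intros x [_ H]. exact H.
    - apply card_image; auto. apply act_inj.
    - exact Hkg.
    - apply card_image; auto. apply act_inj.
    - destruct (card_sub_exists _ (transl_cap G X ac (gmul G g h) Y) Y nY HY)
        as [k [Hk _]]; [intros x [H _]; auto|].
      assert (Hrk : (r <= k)%nat).
      { eapply card_mono; [|exact Hr|exact Hk].
        intros x [[z [[_ [y [Hy ->]]] ->]] [Hx _]]. split; auto.
        exists y; split; auto. rewrite actM; auto. }
      exists k, nY. split; auto. split; auto.
      apply le_INR in Hle, Hrk. rewrite !plus_INR in Hle. lra. }
  split; [|split].
  - exists a0, a0. rewrite gmulVr; auto.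
  - intros x y [a [b [Ha [Hb ->]]]] [c [d [Hc [Hd ->]]]]. apply Step2; apply Step1; auto.
  - intros x [a [b [Ha [Hb ->]]]]. exists b, a. split; auto. split; auto.
    apply ginv_unique. rewrite <- gmulA, (gmulA G (ginv G b)), gmulVl, gmul1l, gmulVr; auto.
Qed.
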